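(* Let $n,m\geq1$. Let $p_{ij}\in\mathbb{R}$ ($i=1,\ldots,n$, $j=1,\ldots,m$), $w_{j}>0$, $d_{j}>0$, $h_{j}\in\mathbb{R}$ ($j=1,\ldots,m$), $b_{ik}\in\mathbb{R}\cup\{-\infty\}$ ($i,k=1,\ldots,n$), nonzero reals $c_{1},\ldots,c_{n}$, and reals $f_{i}\leq g_{i}$ ($i=1,\ldots,n$). Consider the problem of minimizing over $\bm{x}=(x_{1},\ldots,x_{n})^{T}\in\mathbb{R}^{n}$ $$\max_{1\leq j\leq m}\Big(w_{j}\max_{1\leq i\leq n}|x_{i}-p_{ij}|+h_{j}\Big)$$ subject to $\max_{1\leq i\leq n}|x_{i}-p_{ij}|\leq d_{j}$ ($j=1,\ldots,m$), $b_{ik}+c_{k}x_{k}\leq c_{i}x_{i}$ ($i,k=1,\ldots,n$), and $f_{i}\leq x_{i}\leq g_{i}$ ($i=1,\ldots,n$). Suppose that 1. $\max_{1\leq i_{1},\ldots,i_{k-1}\leq n,\ i_{0}=i_{k}=i}(b_{i_{0}i_{1}}+\cdots+b_{i_{k-1}i_{k}})\leq0$ for all $i,k=1,\ldots,n$; 2. $b_{ik}^{\ast}+\max\{\max_{1\leq l\leq m}(c_{k}p_{kl}-|c_{k}|d_{l}),\min\{c_{k}f_{k},c_{k}g_{k}\}\}\leq\min\{\min_{1\leq j\leq m}(c_{i}p_{ij}+|c_{i}|d_{j}),\max\{c_{i}f_{i},c_{i}g_{i}\}\}$ for all $i,k=1,\ldots,n$. Then the minimum value of the problem is $$\theta=\max_{1\leq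 i,k\leq n}\max_{1\leq j,l\leq m}\max\Bigg\{\frac{|c_{i}|w_{l}h_{j}+|c_{k}|w_{j}h_{l}}{|c_{i}|w_{l}+|c_{k}|w_{j}}+\frac{w_{j}w_{l}}{|c_{k}|w_{j}+|c_{i}|w_{l}}(b_{ik}^{\ast}-c_{i}p_{ij}+c_{k}p_{kl}),$$ $$h_{j}+\frac{w_{j}}{|c_{i}|}\big(b_{ik}^{\ast}-c_{i}p_{ij}+\max\{c_{k}p_{kl}-|c_{k}|d_{l},\min\{c_{k}f_{k},c_{k}g_{k}\}\}\big),$$ $$h_{l}+\frac{w_{l}}{|c_{k}|}\big(b_{ik}^{\ast}-\min\{c_{i}p_{ij}+|c_{i}|d_{j},\max\{c_{i}f_{i},c_{i}g_{i}\}\}+c_{k}p_{kl}\big)\Bigg\},$$ and all solution vectors $\bm{x}=(x_{i})$ have entries $x_{i}=y_{i}/c_{i}$, where $y_{i}=\max_{1\leq k\leq n}(b_{ik}^{\ast}+v_{k})$, $i=1,\ldots,n$, and the parameter vector $\bm{v}=(v_{k})$ satisfies, for each $k=1,\ldots,n$, $$\max_{1\leq j\leq m}\max\left\{\frac{|c_{k}|(h_{j}-\theta)}{w_{j}}+c_{k}p_{kj},\ c_{k}p_{kj}-|c_{k}|d_{j},\ \min\{c_{k}f_{k},c_{k}g_{k}\}\right\}\leq v_{k}$$ $$\leq\min_{1\leq i\leq n}\left(\min_{1\leq j\leq m}\min\left\{\frac{|c_{i}|(\theta-h_{j})}{w_{j}}+c_{i}p_{ij},\ c_{i}p_{ij}+|c_{i}|d_{j},\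 \max\{c_{i}f_{i},c_{i}g_{i}\}\right\}-b_{ik}^{\ast}\right).$$
   Context: Conventions: $-\infty+a=-\infty$ for any $a$, and $a-(-\infty)=+\infty$ for real $a$. For $i,k=1,\ldots,n$ define $$\beta_{ik}=\max_{1\leq l\leq n-1}\ \max_{1\leq i_{1},\ldots,i_{l-1}\leq n,\ i_{0}=i,\ i_{l}=k}(b_{i_{0}i_{1}}+\cdots+b_{i_{l-1}i_{l}})$$ (an empty maximum is $-\infty$), and set $b_{ik}^{\ast}=\beta_{ik}$ if $i\neq k$ and $b_{ii}^{\ast}=\max\{\beta_{ii},0\}$. *)

(* Defs.v *)
From HB Require Import structures.
From mathcomp Require Import all_boot all_order all_algebra.
From mathcomp Require Import reals constructive_ereal.
Set Implicit Arguments. Unset Strict Implicit. Unset Printing Implicit Defensive.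
Import Order.TTheory GRing.Theory Num.Theory.
Local Open Scope ring_scope.
Local Open Scope ereal_scope.

Section Defs.
Variable R : realType.
Variable n : nat.

(* weight b_{i i1} + b_{i1 i2} + ... + b_{il k} of the path i -> s -> k
   (s = list of intermediate vertices); -oo + a = -oo (ereal addition) *)
Fixpoint pathw (b : 'I_n -> 'I_n -> \bar R) (i : 'I_n) (s : seq 'I_n)
  (k : 'I_n) : \bar R :=
  match s with
  | [::] => b i k
  | j :: s' => b i j + pathw b j s' k
  end.

(* beta_{ik}: max over paths of length l = 1..n-1 (l-1 intermediate
   vertices, l-1 = 0..n-2); empty max = -oo *)
Definition beta (b : 'I_n -> 'I_n -> \bar R) (i k : 'I_n) : \bar R :=
  \big[Order.max/-oo]_(l < n.-1)
     \big[Order.max/-oo]_(t : l.-tuple 'I_n) pathw b i t k.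

Definition bstar (b : 'I_n -> 'I_n -> \bar R) (i k : 'I_n) : \bar R :=
  if i == k then Order.max (beta b i i) 0 else beta b i k.
End Defs.

Section Problem.
Variables (R : realType) (n m : nat).
Variables (p : 'I_n -> 'I_m -> R) (w d h : 'I_m -> R)
  (b : 'I_n -> 'I_n -> \bar R) (c f g : 'I_n -> R).

(* max_i |x_i - p_ij|  (n >= 1, values nonnegative, so idx 0 is harmless) *)
Definition chebdist (x : 'I_n -> R) (j : 'I_m) : R :=
  (\big[Order.max/0%R]_(i < n) `|x i - p i j|)%R.

Definition objective (x : 'I_n -> R) : \bar R :=
  \big[Order.max/-oo]_(j < m) ((w j * chebdist x j + h j)%R)%:E.

Definition feasible (x : 'I_n -> R) : Prop :=
  [/\ forall j, (chebdist x j <= d j)%R,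
      forall i k, b i k + (c k * x k)%:E <= (c i * x i)%:E
    & forall i, (f i <= x i <= g i)%R].

Definition lowk (k : 'I_n) : \bar R :=
  Order.max (\big[Order.max/-oo]_(l < m) ((c k * p k l - `|c k| * d l)%R)%:E)
            ((Order.min (c k * f k) (c k * g k))%R)%:E.

Definition uppi (i : 'I_n) : \bar R :=
  Order.min (\big[Order.min/+oo]_(j < m) ((c i * p i j + `|c i| * d j)%R)%:E)
            ((Order.max (c i * f i) (c i * g i))%R)%:E.

Definition theta_term1 (i k : 'I_n) (j l : 'I_m) : \bar R :=
  ((`|c i| * w l * h j + `|c k| * w j * h l)
      / (`|c i| * w l + `|c k| * w j))%R%:E
  + ((w j * w l / (`|c k| * w j + `|c i| * w l))%R)%:E
    * (bstar b i k - (c i * p i j)%:E + (c k * p k l)%:E).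

Definition theta_term2 (i k : 'I_n) (j l : 'I_m) : \bar R :=
  (h j)%:E + ((w j / `|c i|)%R)%:E
    * (bstar b i k - (c i * p i j)%:E + lowk k).

Definition theta_term3 (i k : 'I_n) (j l : 'I_m) : \bar R :=
  (h l)%:E + ((w l / `|c k|)%R)%:E
    * (bstar b i k - uppi i + (c k * p k l)%:E).

Definition theta : \bar R :=
  \big[Order.max/-oo]_(i < n) \big[Order.max/-oo]_(k < n)
  \big[Order.max/-oo]_(j < m) \big[Order.max/-oo]_(l < m)
  Order.max (Order.max (theta_term1 i k j l) (theta_term2 i k j l))
            (theta_term3 i k j l).

Definition vlow (th : \bar R) (k : 'I_n) : \bar R :=
  \big[Order.max/-oo]_(j < m)
    Order.max (Order.max
      (((`|c k| / w j)%R)%:E * ((h j)%:E - th) + (c k * p k j)%:E)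
      ((c k * p k j - `|c k| * d j)%R)%:E)
      ((Order.min (c k * f k) (c k * g k))%R)%:E.

(* upper bound on v_k; a - (-oo) = +oo *)
Definition vupp (th : \bar R) (k : 'I_n) : \bar R :=
  \big[Order.min/+oo]_(i < n)
    ((\big[Order.min/+oo]_(j < m)
       Order.min (Order.min
         (((`|c i| / w j)%R)%:E * (th - (h j)%:E) + (c i * p i j)%:E)
         ((c i * p i j + `|c i| * d j)%R)%:E)
         ((Order.max (c i * f i) (c i * g i))%R)%:E)
     - bstar b i k).

Definition yvec (v : 'I_n -> R) (i : 'I_n) : \bar R :=
  \big[Order.max/-oo]_(k < n) (bstar b i k + (v k)%:E).
End Problem.

(* Main.v *)
Require Import Defs.
From HB Require Import structures.
From mathcomp Require Import all_boot all_order all_algebra.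
From mathcomp Require Import reals constructive_ereal.
From mathcomp Require Import zify ring lra.
Import Order.TTheory GRing.Theory Num.Theory.
Local Open Scope ring_scope.
Local Open Scope ereal_scope.

Section Helpers.
Variable R : realType.

Lemma bigmax_le_seq (I : eqType) (r : seq I) (F : I -> \bar R) z :
  \big[Order.max/-oo]_(i <- r) F i <= z <-> forall i, i \in r -> F i <= z.
Proof.
elim: r => [|a r IH]; rewrite ?big_nil ?big_cons.
  by split => // _; exact: leNye.
rewrite ge_max; split.
  move=> /andP[Ha /IH Hr] i; rewrite inE => /orP[/eqP->//|]; exact: Hr.
move=> H; apply/andP; split; first by apply: H; rewrite inE eqxx.
by apply/IH => i Hi; apply: H; rewrite inE Hi orbT.
Qed.

Lemma bigmax_leP {I : finType} (F : I -> \bar R) z :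
  \big[Order.max/-oo]_(i : I) F i <= z <-> forall i, F i <= z.
Proof.
rewrite bigmax_le_seq; split => H i; last by move=> _; exact: H.
by apply: H; rewrite mem_index_enum.
Qed.

Lemma le_bigmax {I : finType} (F : I -> \bar R) i :
  F i <= \big[Order.max/-oo]_(i : I) F i.
Proof. by move: (le_refl (\big[Order.max/-oo]_(i : I) F i)) => /bigmax_leP; apply. Qed.

Lemma le_bigmin_seq (I : eqType) (r : seq I) (F : I -> \bar R) z :
  z <= \big[Order.min/+oo]_(i <- r) F i <-> forall i, i \in r -> z <= F i.
Proof.
elim: r => [|a r IH]; rewrite ?big_nil ?big_cons.
  by split => // _; exact: leey.
rewrite le_min; split.
  move=> /andP[Ha /IH Hr] i; rewrite inE => /orP[/eqP->//|]; exact: Hr.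
move=> H; apply/andP; split; first by apply: H; rewrite inE eqxx.
by apply/IH => i Hi; apply: H; rewrite inE Hi orbT.
Qed.

Lemma le_bigminP {I : finType} (F : I -> \bar R) z :
  z <= \big[Order.min/+oo]_(i : I) F i <-> forall i, z <= F i.
Proof.
rewrite le_bigmin_seq; split => H i; last by move=> _; exact: H.
by apply: H; rewrite mem_index_enum.
Qed.

Lemma bigmin_le {I : finType} (F : I -> \bar R) i :
  \big[Order.min/+oo]_(i : I) F i <= F i.
Proof. by move: (le_refl (\big[Order.min/+oo]_(i : I) F i)) => /le_bigminP; apply. Qed.

Lemma bigmax_att_seq (I : eqType) (r : seq I) (F : I -> \bar R) :
  \big[Order.max/-oo]_(i <- r) F i = -oo \/
  exists2 i, i \in r & \big[Order.max/-oo]_(i <- r) F i = F i.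
Proof.
elim: r => [|a r IH]; rewrite ?big_nil ?big_cons; first by left.
case: IH => [->|[i Hi ->]].
  by right; exists a; rewrite ?inE ?eqxx // max_l ?leNye.
right; rewrite maxEle; case: ifP => _.
  by exists i => //; rewrite inE Hi orbT.
by exists a; rewrite ?inE ?eqxx.
Qed.

Lemma bigmax_att {I : finType} (F : I -> \bar R) :
  \big[Order.max/-oo]_(i : I) F i = -oo \/
  exists i, \big[Order.max/-oo]_(i : I) F i = F i.
Proof.
case: (@bigmax_att_seq _ (index_enum I) F) => [->|[i _ ->]]; first by left.
by right; exists i.
Qed.


Lemma nonuniq_split {T : eqType} (s : seq T) : ~~ uniq s ->
  exists x s1 s2 s3, s = s1 ++ x :: s2 ++ x :: s3.
Proof.
elim: s => [//|a t IH] /=; rewrite negb_and negbK => /orP[Hin|Hu].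
  by case/splitPr: Hin => t1 t2; exists a, [::], t1, t2.
have [x [s1 [s2 [s3 ->]]]] := IH Hu.
by exists x, (a :: s1), s2, s3.
Qed.

Section Paths.
Variable n : nat.
Variable b : 'I_n -> 'I_n -> \bar R.

Lemma nonuniq_split_I (s : seq 'I_n) : ~~ uniq s ->
  exists (x : 'I_n) (s1 s2 s3 : seq 'I_n), s = s1 ++ x :: s2 ++ x :: s3.
Proof. exact: nonuniq_split. Qed.

Lemma pathw_cat i s1 x s2 k :
  pathw b i (s1 ++ x :: s2) k = pathw b i s1 x + pathw b x s2 k.
Proof.
elim: s1 i => [|a s1 IH] i //=.
by rewrite IH addeA.
Qed.

Hypothesis cond1 : forall (i : 'I_n) (l : 'I_n) (t : l.-tuple 'I_n),
  pathw b i t i <= 0.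

Lemma cyc_le0 i s : (size s < n)%N -> pathw b i s i <= 0.
Proof. by move=> Hs; exact: (cond1 i (Ordinal Hs) (in_tuple s)). Qed.

Lemma pathw_beta i s k : (size s < n.-1)%N -> pathw b i s k <= beta b i k.
Proof.
move=> Hs; rewrite /beta.
apply: (le_trans _ (le_bigmax (fun l : 'I_n.-1 =>
  \big[Order.max/-oo]_(t : l.-tuple 'I_n) pathw b i t k) (Ordinal Hs))).
exact: (le_bigmax (fun t : (size s).-tuple 'I_n => pathw b i t k) (in_tuple s)).
Qed.

Lemma beta_le_bstar i k : beta b i k <= bstar b i k.
Proof. by rewrite /bstar; case: eqP => [->|_]; rewrite ?le_max ?lexx. Qed.

Lemma le_pred_lt a : (0 < n)%N -> (a <= n.-1)%N = (a < n)%N.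
Proof. by move=> n0; rewrite -ltnS prednK. Qed.

Lemma lt_pred_lt a : (0 < n)%N -> (a < n.-1)%N = (a.+2 <= n)%N.
Proof. by move=> n0; rewrite -ltnS prednK. Qed.

Lemma simple_le_bstar s i l : (size s <= n.-1)%N -> i \notin s -> l \notin s ->
  uniq s -> pathw b i s l <= bstar b i l.
Proof.
move=> Hs Hi Hl Hu.
have n0 : (0 < n)%N := leq_ltn_trans (leq0n _) (ltn_ord i).
case: (eqVneq i l) => [<-|Hne].
  rewrite /bstar eqxx le_max; apply/orP; right; apply: cyc_le0.
  by rewrite -le_pred_lt.
rewrite /bstar (negPf Hne); apply: pathw_beta; rewrite lt_pred_lt //.
have Hu2 : uniq (i :: l :: s) by rewrite /= inE negb_or Hne Hi Hl Hu.
have := card_uniqP Hu2; move=> Hc.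
have := max_card (mem (i :: l :: s)); rewrite Hc card_ord /=.
lia.
Qed.

Lemma walk_le_bstar s i l : (size s <= n.-1)%N ->
  pathw b i s l <= bstar b i l.
Proof.
move=> Hs0; have n0 : (0 < n)%N := leq_ltn_trans (leq0n _) (ltn_ord i).
move: Hs0; rewrite le_pred_lt //; move: {2}(size s) (leqnn (size s)) => K.
elim: K s i l => [|K IH] s i l HK Hs.
  by case: s HK Hs => // _ Hs; apply: simple_le_bstar; rewrite ?le_pred_lt.
case: (boolP (i \in s)) => Hi.
  case/splitPr: Hi HK Hs => s1 s2 HK Hs.
  rewrite pathw_cat; apply: (le_trans (leeD2r _ (cyc_le0 _ _ _))).
    move: Hs; rewrite size_cat /=; lia.
  rewrite add0r; apply: IH; move: HK Hs; rewrite size_cat /=; lia.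
case: (boolP (l \in s)) => Hl.
  case/splitPr: Hl Hi HK Hs => s1 s2 Hi HK Hs.
  rewrite pathw_cat; apply: (le_trans (leeD2l _ (cyc_le0 _ _ _))).
    move: Hs; rewrite size_cat /=; lia.
  rewrite addr0; apply: IH; move: HK Hs; rewrite size_cat /=; lia.
case: (boolP (uniq s)) => Hu; first by apply: simple_le_bstar; rewrite ?le_pred_lt.
have [x [s1 [s2 [s3 Es]]]] := nonuniq_split_I s Hu.
rewrite Es pathw_cat [pathw _ x _ _]pathw_cat addeA.
have Hsz : size s = (size s1 + size s2 + size s3 + 2)%N.
  by rewrite Es !size_cat /= size_cat /=; lia.
apply: (le_trans (leeD2r _ (leeD2l _ (cyc_le0 x s2 _)))).
  lia.
rewrite addr0 -pathw_cat; apply: IH; rewrite size_cat /=; lia.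
Qed.

Lemma beta_att k l : beta b k l = -oo \/
  exists s : seq 'I_n, (size s < n.-1)%N /\ beta b k l = pathw b k s l.
Proof.
rewrite /beta.
case: (bigmax_att (fun l0 : 'I_n.-1 =>
  \big[Order.max/-oo]_(t : l0.-tuple 'I_n) pathw b k t l)) => [->|[l0 ->]].
  by left.
case: (bigmax_att (fun t : l0.-tuple 'I_n => pathw b k t l)) => [->|[t ->]].
  by left.
by right; exists t; rewrite size_tuple.
Qed.

Lemma bstar_ge0 i : 0 <= bstar b i i.
Proof. by rewrite /bstar eqxx le_max lexx orbT. Qed.

Lemma b_bstar i k l : b i k + bstar b k l <= bstar b i l.
Proof.
have n0 : (0 < n)%N := leq_ltn_trans (leq0n _) (ltn_ord i).
have key : forall s, (size s < n.-1)%N -> b i k + pathw b k s l <= bstar b i l.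
  by move=> s Hs; apply: (walk_le_bstar (k :: s)).
have kb : b i k + beta b k l <= bstar b i l.
  by case: (beta_att k l) => [->|[s [Hs ->]]]; [rewrite addeNy leNye | exact: key].
rewrite {1}/bstar; case: eqP => [Ekl|_] //.
subst l; rewrite maxEle; case: ifP => _ //.
by rewrite addr0; apply: (walk_le_bstar [::]).
Qed.

Lemma closure_walk (y : 'I_n -> R) :
  (forall i k, b i k + (y k)%:E <= (y i)%:E) ->
  forall s i k, pathw b i s k + (y k)%:E <= (y i)%:E.
Proof.
move=> Hy; elim => [|a s IH] i k //=.
rewrite -addeA; apply: le_trans (Hy i a); exact: leeD2l.
Qed.

Lemma closure_bstar (y : 'I_n -> R) :
  (forall i k, b i k + (y k)%:E <= (y i)%:E) ->
  forall i k, bstar b i k + (y k)%:E <= (y i)%:E.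
Proof.
move=> Hy.
have kb : forall i k, beta b i k + (y k)%:E <= (y i)%:E.
  move=> i k; case: (beta_att i k) => [->|[s [_ ->]]]; first by rewrite addNye leNye.
  exact: closure_walk.
move=> i k; rewrite /bstar; case: eqP => [->|_] //.
by rewrite maxEle; case: ifP => _ //; rewrite add0r.
Qed.

Lemma yvec_closure (v : 'I_n -> R) i j :
  b i j + yvec b v j <= yvec b v i.
Proof.
rewrite /yvec.
case: (bigmax_att (fun k => bstar b j k + (v k)%:E)) => [->|[k ->]].
  by rewrite addeNy leNye.
rewrite addeA; apply: le_trans (le_bigmax (fun k => bstar b i k + (v k)%:E) k).
exact: leeD2r (b_bstar i j k).
Qed.

Lemma yvec_self (y : 'I_n -> R) :
  (forall i k, b i k + (y k)%:E <= (y i)%:E) ->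
  forall i, yvec b y i = (y i)%:E.
Proof.
move=> Hy i; apply/eqP; rewrite eq_le; apply/andP; split.
  by apply/bigmax_leP => k; exact: closure_bstar.
apply: le_trans (le_bigmax (fun k => bstar b i k + (y k)%:E) i).
by rewrite -{1}(add0r (y i)%:E); apply: leeD2r; exact: bstar_ge0.
Qed.

End Paths.


End Helpers.

Section RealH.
Variable R : realType.
Local Open Scope ring_scope.

Lemma abs_scale (c x q e : R) : c != 0%R ->
  (`|x - q| <= e)%R = (c * q - `|c| * e <= c * x <= c * q + `|c| * e)%R.
Proof.
move=> c0; have cp : (0 < `|c|)%R by rewrite normr_gt0.
by rewrite -ler_distl -mulrBr normrM ler_pM2l.
Qed.

Lemma box_scale (c x f g : R) : c != 0%R -> (f <= g)%R ->
  (f <= x <= g)%R = (Order.min (c * f) (c * g) <= c * x <= Order.max (c * f) (c * g))%R.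
Proof.
move=> c0 fg; case: (ltgtP c 0%R) => [cn|cp|ce]; last by rewrite ce eqxx in c0.
  have -> : Order.min (c * f) (c * g) = c * g by apply/min_idPr; rewrite ler_nM2l.
  have -> : Order.max (c * f) (c * g) = c * f by apply/max_idPl; rewrite ler_nM2l.
  by rewrite !ler_nM2l; case: (f <= x)%R; case: (x <= g)%R.
have -> : Order.min (c * f) (c * g) = c * f by apply/min_idPl; rewrite ler_pM2l.
have -> : Order.max (c * f) (c * g) = c * g by apply/max_idPr; rewrite ler_pM2l.
by rewrite !ler_pM2l.
Qed.

Lemma bigmaxR_le_seq (I : eqType) (r : seq I) (F : I -> R) z : (0 <= z)%R ->
  (\big[Order.max/0%R]_(i <- r) F i <= z)%R <-> forall i, i \in r -> (F i <= z)%R.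
Proof.
move=> z0; elim: r => [|a r IH]; rewrite ?big_nil ?big_cons; first by split.
rewrite ge_max; split.
  move=> /andP[Ha /IH Hr] i; rewrite inE => /orP[/eqP->//|]; exact: Hr.
move=> H; apply/andP; split; first by apply: H; rewrite inE eqxx.
by apply/IH => i Hi; apply: H; rewrite inE Hi orbT.
Qed.

Lemma bigmaxR_leP {I : finType} (F : I -> R) z : (0 <= z)%R ->
  (\big[Order.max/0%R]_(i : I) F i <= z)%R <-> forall i, (F i <= z)%R.
Proof.
move=> z0; rewrite bigmaxR_le_seq //; split => H i; last by move=> _; exact: H.
by apply: H; rewrite mem_index_enum.
Qed.


Lemma sub_ge0_iff (x y k z t : R) : 0 < k -> y - x = k * (t - z) -> (x <= y) = (z <= t).
Proof. by move=> kp E; rewrite -subr_ge0 E pmulr_rge0 // subr_ge0. Qed.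

Lemma R1 (a e u v hj hl B P Q t : R) : 0 < a -> 0 < e -> 0 < u -> 0 < v ->
  ((a*v*hj + e*u*hl)/(a*v + e*u) + u*v/(e*u + a*v) * (B - P + Q) <= t) =
  (B + (e/v*(hl - t) + Q) <= a/u*(t - hj) + P).
Proof.
move=> ap ep up vp.
have D : 0 < a*v + e*u by rewrite addr_gt0 // mulr_gt0.
symmetry; apply: (sub_ge0_iff _ _ ((a*v+e*u)/(u*v))).
  by rewrite divr_gt0 // mulr_gt0.
rewrite [e*u + a*v]addrC.
field.
by rewrite (gt_eqF D) (gt_eqF up) (gt_eqF vp).
Qed.

Lemma R2 (a u hj B P L t : R) : 0 < a -> 0 < u ->
  (hj + u/a * (B - P + L) <= t) = (B + L <= a/u*(t - hj) + P).
Proof.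
move=> ap up; symmetry; apply: (sub_ge0_iff _ _ (a/u)); first by rewrite divr_gt0.
field. by rewrite (gt_eqF ap) (gt_eqF up).
Qed.

Lemma R3 (e v hl B U Q t : R) : 0 < e -> 0 < v ->
  (hl + v/e * (B - U + Q) <= t) = (B + (e/v*(hl - t) + Q) <= U).
Proof.
move=> ep vp; symmetry; apply: (sub_ge0_iff _ _ (e/v)); first by rewrite divr_gt0.
field. by rewrite (gt_eqF ep) (gt_eqF vp).
Qed.

End RealH.


Section Problem.
Variables (R : realType) (n m : nat).
Variables (p : 'I_n -> 'I_m -> R) (w d h : 'I_m -> R)
  (b : 'I_n -> 'I_n -> \bar R) (c f g : 'I_n -> R).
Hypotheses (n1 : (1 <= n)%N) (m1 : (1 <= m)%N).
Hypotheses (wp : forall j, (0 < w j)%R) (dp : forall j, (0 < d j)%R).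
Hypotheses (c0 : forall i, c i != 0%R) (fg : forall i, (f i <= g i)%R).
Hypothesis cond1 : forall (i : 'I_n) (l : 'I_n) (t : l.-tuple 'I_n), pathw b i t i <= 0.
Hypothesis cond2 : forall i k, bstar b i k + lowk p d c f g k <= uppi p d c f g i.

Definition UpF (th : \bar R) (i : 'I_n) : \bar R :=
  \big[Order.min/+oo]_(j < m)
       Order.min (Order.min
         (((`|c i| / w j)%R)%:E * (th - (h j)%:E) + (c i * p i j)%:E)
         ((c i * p i j + `|c i| * d j)%R)%:E)
         ((Order.max (c i * f i) (c i * g i))%R)%:E.

Lemma vuppE th k : vupp p w d h b c f g th k =
  \big[Order.min/+oo]_(i < n) (UpF th i - bstar b i k).
Proof. by []. Qed.

Lemma LA1 (t y : R) k : vlow p w d h c f g t%:E k <= y%:E <->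
  forall j, [/\ (`|c k| / w j * (h j - t) + c k * p k j <= y)%R,
               (c k * p k j - `|c k| * d j <= y)%R &
               (Order.min (c k * f k) (c k * g k) <= y)%R].
Proof.
rewrite /vlow bigmax_leP; split => H j.
  by move: (H j); rewrite !ge_max -EFinB -EFinM -EFinD !lee_fin => /andP[/andP[]].
by case: (H j) => H1 H2 H3; rewrite !ge_max -EFinB -EFinM -EFinD !lee_fin H1 H2 H3.
Qed.

Lemma LA2 (t y : R) i : y%:E <= UpF t%:E i <->
  forall j, [/\ (y <= `|c i| / w j * (t - h j) + c i * p i j)%R,
               (y <= c i * p i j + `|c i| * d j)%R &
               (y <= Order.max (c i * f i) (c i * g i))%R].
Proof.
rewrite /UpF le_bigminP; split => H j.
  by move: (H j); rewrite !le_min -EFinB -EFinM -EFinD !lee_fin => /andP[/andP[]].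
by case: (H j) => H1 H2 H3; rewrite !le_min -EFinB -EFinM -EFinD !lee_fin H1 H2 H3.
Qed.


Definition Good (th : \bar R) (y : 'I_n -> R) :=
  [/\ forall i k, b i k + (y k)%:E <= (y i)%:E,
      forall k, vlow p w d h c f g th k <= (y k)%:E
    & forall i, (y i)%:E <= UpF th i].

Lemma chebdist_ge0 x j : (0 <= chebdist p x j)%R.
Proof.
rewrite /chebdist; apply: (big_ind (fun z : R => 0 <= z)%R) => //.
by move=> a a' ha ha'; rewrite le_max ha.
Qed.

Lemma conv1 (a cq t hh ww : R) :
  (cq - a * ((t - hh) / ww) = a / ww * (hh - t) + cq)%R.
Proof. ring. Qed.

Lemma conv2 (a cq t hh ww : R) :
  (cq + a * ((t - hh) / ww) = a / ww * (t - hh) + cq)%R.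
Proof. ring. Qed.

Lemma LA3 x (t : R) :
  (feasible p d b c f g x /\ objective p w h x <= t%:E) <->
  Good t%:E (fun i => c i * x i)%R.
Proof.
have j0 : 'I_m := Ordinal m1.
have i0 : 'I_n := Ordinal n1.
have Hobj : objective p w h x <= t%:E <->
    forall i j, (`|x i - p i j| <= (t - h j) / w j)%R.
  rewrite /objective bigmax_leP; split.
    move=> H i j; have := H j; rewrite lee_fin => Hj.
    have Hc : (chebdist p x j <= (t - h j) / w j)%R.
      by rewrite ler_pdivlMr //; lra.
    have s0 : (0 <= (t - h j) / w j)%R := le_trans (chebdist_ge0 x j) Hc.
    by move: Hc; rewrite /chebdist bigmaxR_leP //; apply.
  move=> H j; rewrite lee_fin.
  have s0 : (0 <= (t - h j) / w j)%R := le_trans (normr_ge0 _) (H i0 j).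
  have : (chebdist p x j <= (t - h j) / w j)%R.
    by rewrite /chebdist bigmaxR_leP // => i; exact: H.
  by rewrite ler_pdivlMr // => Hc; have := wp j; lra.
have Hd : (forall j, (chebdist p x j <= d j)%R) <->
    forall i j, (`|x i - p i j| <= d j)%R.
  split.
    by move=> H i j; move: (H j); move/(@bigmaxR_leP _ _ _ _ (ltW (dp j))); apply.
  by move=> H j; apply/(@bigmaxR_leP _ _ _ _ (ltW (dp j))) => i; exact: H.
rewrite /feasible; split.
  move=> [[/Hd Hd' Hcl Hbox] /Hobj Hob]; split => //.
    move=> k; apply/LA1 => j; split.
    - by move: (Hob k j); rewrite (abs_scale _ _ _ _ _ (c0 k)) conv1 => /andP[].
    - by move: (Hd' k j); rewrite (abs_scale _ _ _ _ _ (c0 k)) => /andP[].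
    - by move: (Hbox k); rewrite (box_scale _ _ _ _ _ (c0 k)) // => /andP[].
  move=> i; apply/LA2 => j; split.
  - by move: (Hob i j); rewrite (abs_scale _ _ _ _ _ (c0 i)) conv2 => /andP[].
  - by move: (Hd' i j); rewrite (abs_scale _ _ _ _ _ (c0 i)) => /andP[].
  - by move: (Hbox i); rewrite (box_scale _ _ _ _ _ (c0 i)) // => /andP[].
move=> [Hcl Hlo Hup]; split; first split => //.
- apply/Hd => i j; rewrite (abs_scale _ _ _ _ _ (c0 i)).
  have [_ L _] := (LA1 t (c i * x i)%R i).1 (Hlo i) j.
  have [_ U _] := (LA2 t (c i * x i)%R i).1 (Hup i) j.
  by rewrite L U.
- move=> i; rewrite (box_scale _ _ _ _ _ (c0 i)) //.
  have [_ _ L] := (LA1 t (c i * x i)%R i).1 (Hlo i) j0.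
  have [_ _ U] := (LA2 t (c i * x i)%R i).1 (Hup i) j0.
  by rewrite L U.
- apply/Hobj => i j; rewrite (abs_scale _ _ _ _ _ (c0 i)) conv1 conv2.
  have [L _ _] := (LA1 t (c i * x i)%R i).1 (Hlo i) j.
  have [U _ _] := (LA2 t (c i * x i)%R i).1 (Hup i) j.
  by rewrite L U.
Qed.

Definition LwR k := fine (lowk p d c f g k).
Definition UwR i := fine (uppi p d c f g i).

Lemma lowk_ge k : ((Order.min (c k * f k) (c k * g k))%R)%:E <= lowk p d c f g k.
Proof. by rewrite /lowk le_max lexx orbT. Qed.

Lemma uppi_le i : uppi p d c f g i <= ((Order.max (c i * f i) (c i * g i))%R)%:E.
Proof. by rewrite /uppi ge_min lexx orbT. Qed.

Lemma lowk_le_uppi k : lowk p d c f g k <= uppi p d c f g k.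
Proof. apply: le_trans (cond2 k k); exact: leeDr (bstar_ge0 _ _ b k). Qed.

Lemma lowk_fin k : lowk p d c f g k \is a fin_num.
Proof.
rewrite fin_numE; apply/andP; split.
  by rewrite -ltNye (lt_le_trans (ltNyr _) (lowk_ge k)).
by rewrite -ltey (le_lt_trans (lowk_le_uppi k) (le_lt_trans (uppi_le k) (ltry _))).
Qed.

Lemma uppi_fin i : uppi p d c f g i \is a fin_num.
Proof.
rewrite fin_numE; apply/andP; split.
  by rewrite -ltNye (lt_le_trans (ltNyr _) (le_trans (lowk_ge i) (lowk_le_uppi i))).
by rewrite -ltey (le_lt_trans (uppi_le i) (ltry _)).
Qed.

Lemma LwE k : lowk p d c f g k = (LwR k)%:E.
Proof. by rewrite /LwR fineK // lowk_fin. Qed.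

Lemma UwE i : uppi p d c f g i = (UwR i)%:E.
Proof. by rewrite /UwR fineK // uppi_fin. Qed.

Lemma bstar_npinf i k : bstar b i k != +oo.
Proof.
apply/negP => /eqP E; have := cond2 i k; rewrite E addye.
  by rewrite UwE leNgt ltry.
by rewrite LwE.
Qed.

Lemma LwP k (z : R) : (LwR k <= z)%R <->
  (forall l, (c k * p k l - `|c k| * d l <= z)%R) /\
  (Order.min (c k * f k) (c k * g k) <= z)%R.
Proof.
rewrite -lee_fin -LwE /lowk ge_max; split.
  move=> /andP[/bigmax_leP H1 H2]; split => // l; by rewrite -lee_fin.
case=> H1 H2; apply/andP; split => //; apply/bigmax_leP => l; by rewrite lee_fin.
Qed.

Lemma UwP i (z : R) : (z <= UwR i)%R <->
  (forall j, (z <= c i * p i j + `|c i| * d j)%R) /\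
  (z <= Order.max (c i * f i) (c i * g i))%R.
Proof.
rewrite -lee_fin -UwE /uppi le_min; split.
  move=> /andP[/le_bigminP H1 H2]; split => // j; by rewrite -lee_fin.
case=> H1 H2; apply/andP; split => //; apply/le_bigminP => j; by rewrite lee_fin.
Qed.

Lemma PairIK i k (t : R) :
  bstar b i k + vlow p w d h c f g t%:E k <= UpF t%:E i <->
  forall j l, [/\ theta_term1 p w h b c i k j l <= t%:E,
                 theta_term2 p w d h b c f g i k j l <= t%:E &
                 theta_term3 p w d h b c f g i k j l <= t%:E].
Proof.
have ai : (0 < `|c i|)%R by rewrite normr_gt0.
have ak : (0 < `|c k|)%R by rewrite normr_gt0.
have pos1 : forall j l, (0 < w j * w l / (`|c k| * w j + `|c i| * w l))%R.
  move=> j l; have := wp j; have := wp l => ? ?.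
  by rewrite divr_gt0 ?mulr_gt0 ?addr_gt0 ?mulr_gt0.
have pos2 : forall j, (0 < w j / `|c i|)%R by move=> j; rewrite divr_gt0.
have pos3 : forall l, (0 < w l / `|c k|)%R by move=> l; rewrite divr_gt0.
have bnp := bstar_npinf i k.
case E: (bstar b i k) bnp => [B| |] // _; last first.
  split => [_ j l|_]; last by rewrite addNye leNye.
  rewrite /theta_term1 /theta_term2 /theta_term3 E !addNye.
  by rewrite gt0_muleNy ?lte_fin // addeNy gt0_muleNy ?lte_fin // addeNy
    gt0_muleNy ?lte_fin // addeNy !leNye.
have T1 : forall j l, (theta_term1 p w h b c i k j l <= t%:E) =
   (B + (`|c k| / w l * (h l - t) + c k * p k l) <= `|c i| / w j * (t - h j) + c i * p i j)%R.
  move=> j l; rewrite /theta_term1 E -!EFinB -!EFinD -?EFinM -?EFinD lee_fin.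
  by rewrite R1 ?wp.
have T2 : forall j l, (theta_term2 p w d h b c f g i k j l <= t%:E) =
   (B + LwR k <= `|c i| / w j * (t - h j) + c i * p i j)%R.
  move=> j l; rewrite /theta_term2 E LwE -!EFinB -!EFinD -?EFinM -?EFinD lee_fin.
  by rewrite R2 ?wp.
have T3 : forall j l, (theta_term3 p w d h b c f g i k j l <= t%:E) =
   (B + (`|c k| / w l * (h l - t) + c k * p k l) <= UwR i)%R.
  move=> j l; rewrite /theta_term3 E UwE -!EFinB -!EFinD -?EFinM -?EFinD lee_fin.
  by rewrite R3 ?wp.
have C2 : (B + LwR k <= UwR i)%R.
  by have := cond2 i k; rewrite E LwE UwE -EFinD lee_fin.
have Bfin : B%:E \is a fin_num by [].
have Step1 : B%:E + vlow p w d h c f g t%:E k <= UpF t%:E i <->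
  forall l, [/\ (B + (`|c k| / w l * (h l - t) + c k * p k l))%:E <= UpF t%:E i,
               (B + (c k * p k l - `|c k| * d l))%:E <= UpF t%:E i &
               (B + Order.min (c k * f k) (c k * g k))%:E <= UpF t%:E i].
  rewrite -leeBrDl //; split.
    move/bigmax_leP => H l; move: (H l).
    rewrite !ge_max -EFinB -EFinM -EFinD => /andP[/andP[H1 H2] H3].
    by split; rewrite EFinD -leeBrDl.
  move=> H; apply/bigmax_leP => l; case: (H l) => H1 H2 H3.
  rewrite !ge_max -EFinB -EFinM -EFinD.
  by move: H1 H2 H3; rewrite !EFinD -!leeBrDl // => -> -> ->.
rewrite Step1; split.
  move=> H j l.
  rewrite T1 T2 T3; split.
  - by case: (H l) => /LA2 H1 _ _; case: (H1 j).
  - rewrite addrC -lerBrDr; apply/LwP; split.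
      move=> l'; rewrite lerBrDr addrC.
      by case: (H l') => _ /LA2 H1 _; case: (H1 j).
    rewrite lerBrDr addrC.
    by case: (H l) => _ _ /LA2 H1; case: (H1 j).
  - apply/UwP; split.
      by move=> j'; case: (H l) => /LA2 H1 _ _; case: (H1 j').
    by case: (H l) => /LA2 H1 _ _; case: (H1 j).
move=> H l.
have [Lf1 Lf2] : (forall l', LwR k >= c k * p k l' - `|c k| * d l')%R /\
                 (LwR k >= Order.min (c k * f k) (c k * g k))%R by apply/LwP.
have [Uf1 Uf2] : (forall j', UwR i <= c i * p i j' + `|c i| * d j')%R /\
                 (UwR i <= Order.max (c i * f i) (c i * g i))%R by apply/UwP.
split; apply/LA2 => j; have [H1 H2 H3] := H j l; move: H1 H2 H3;
  rewrite T1 T2 T3 => H1 H2 /UwP [H3 H3']; split.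
- exact: H1.
- exact: H3.
- exact: H3'.
- have := Lf1 l; lra.
- have := Lf1 l; have := Uf1 j; lra.
- have := Lf1 l; lra.
- have := Lf2; lra.
- have := Uf1 j; lra.
- lra.
Qed.

Lemma theta_leP (z : \bar R) : theta p w d h b c f g <= z <->
  forall i k j l, [/\ theta_term1 p w h b c i k j l <= z,
                 theta_term2 p w d h b c f g i k j l <= z &
                 theta_term3 p w d h b c f g i k j l <= z].
Proof.
rewrite /theta; split.
  move/bigmax_leP => H i k j l; move: (H i) => /bigmax_leP /(_ k) /bigmax_leP /(_ j)
    /bigmax_leP /(_ l); rewrite !ge_max => /andP[/andP[? ?] ?]; by split.
move=> H; apply/bigmax_leP => i; apply/bigmax_leP => k; apply/bigmax_leP => j;
  apply/bigmax_leP => l; case: (H i k j l) => H1 H2 H3.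
by rewrite !ge_max H1 H2 H3.
Qed.

Lemma T2 (t : R) : (forall i k, bstar b i k + vlow p w d h c f g t%:E k <= UpF t%:E i)
  <-> theta p w d h b c f g <= t%:E.
Proof.
rewrite theta_leP; split.
  by move=> H i k; apply/PairIK; exact: H.
by move=> H i k; apply/PairIK; exact: H.
Qed.

Lemma max_npinf (x y : \bar R) : x != +oo -> y != +oo -> Order.max x y != +oo.
Proof. by move=> ? ?; rewrite maxEle; case: ifP. Qed.

Lemma bigmax_npinf {I : finType} (F : I -> \bar R) :
  (forall i, F i != +oo) -> \big[Order.max/-oo]_(i : I) F i != +oo.
Proof. by move=> H; case: (bigmax_att _ F) => [->|[i ->]]. Qed.

Lemma terms_npinf i k j l :
  [/\ theta_term1 p w h b c i k j l != +oo,
      theta_term2 p w d h b c f g i k j l != +oo &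
      theta_term3 p w d h b c f g i k j l != +oo].
Proof.
have ai : (0 < `|c i|)%R by rewrite normr_gt0.
have ak : (0 < `|c k|)%R by rewrite normr_gt0.
have pos1 : (0 < w j * w l / (`|c k| * w j + `|c i| * w l))%R.
  have := wp j; have := wp l => ? ?.
  by rewrite divr_gt0 ?mulr_gt0 ?addr_gt0 ?mulr_gt0.
have pos2 : (0 < w j / `|c i|)%R by rewrite divr_gt0.
have pos3 : (0 < w l / `|c k|)%R by rewrite divr_gt0.
have bnp := bstar_npinf i k.
rewrite /theta_term1 /theta_term2 /theta_term3 LwE UwE.
case: (bstar b i k) bnp => [B| |] // _.
rewrite !addNye.
by rewrite gt0_muleNy ?lte_fin // addeNy gt0_muleNy ?lte_fin // addeNy
    gt0_muleNy ?lte_fin // addeNy.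
Qed.

Lemma theta_fin : theta p w d h b c f g \is a fin_num.
Proof.
have j0 : 'I_m := Ordinal m1.
have i0 : 'I_n := Ordinal n1.
rewrite fin_numE; apply/andP; split.
  have := (theta_leP (theta p w d h b c f g)).1 (lexx _) i0 i0 j0 j0.
  case=> _ H _; rewrite -ltNye; apply: lt_le_trans H.
  rewrite /theta_term2 LwE.
  have := bstar_npinf i0 i0; have := bstar_ge0 _ _ b i0.
  case: (bstar b i0 i0) => [B| |] //= _ _.
  by rewrite -!EFinB -!EFinD -?EFinM -?EFinD ltNyr.
rewrite /theta; apply: bigmax_npinf => i; apply: bigmax_npinf => k;
  apply: bigmax_npinf => j; apply: bigmax_npinf => l.
by case: (terms_npinf i k j l) => *; rewrite !max_npinf.
Qed.

Definition thR := fine (theta p w d h b c f g).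

Lemma thE : theta p w d h b c f g = thR%:E.
Proof. by rewrite /thR fineK // theta_fin. Qed.

Lemma obj_fin x : objective p w h x = (fine (objective p w h x))%:E.
Proof.
have j0 : 'I_m := Ordinal m1.
rewrite /objective.
case: (bigmax_att _ (fun j => ((w j * chebdist p x j + h j)%R)%:E)) => [E|[j ->]] //.
have := le_bigmax _ (fun j => ((w j * chebdist p x j + h j)%R)%:E) j0.
by rewrite E leNgt ltNyr.
Qed.

Lemma lower_bound x : feasible p d b c f g x ->
  theta p w d h b c f g <= objective p w h x.
Proof.
move=> Hf; rewrite obj_fin; apply/T2 => i k.
have [Hcl Hlo Hup] : Good (fine (objective p w h x))%:E (fun i => c i * x i)%R.
  by apply/LA3; split => //; rewrite -obj_fin.
apply: le_trans (Hup i); apply: le_trans (closure_bstar _ _ b _ Hcl i k).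
exact: leeD2l.
Qed.

Lemma subB_le (U B : \bar R) (y : R) : B != +oo -> U != -oo ->
  (y%:E <= U - B) = (B + y%:E <= U).
Proof.
case: B => [r| |] // _ HU; first by rewrite leeBrDl.
by rewrite addNye leNye /= addey // leey.
Qed.

Lemma yvec_fin (v : 'I_n -> R) i : yvec b v i \is a fin_num.
Proof.
rewrite fin_numE; apply/andP; split.
  rewrite -ltNye; apply: lt_le_trans (le_bigmax _ (fun k => bstar b i k + (v k)%:E) i).
  have := bstar_npinf i i; have := bstar_ge0 _ _ b i.
  by case: (bstar b i i) => [B| |] //= _ _; rewrite ltNyr.
apply: bigmax_npinf => k; have := bstar_npinf i k.
by case: (bstar b i k).
Qed.

Lemma le_yvec (v : 'I_n -> R) k : (v k)%:E <= yvec b v k.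
Proof.
apply: le_trans (le_bigmax _ (fun k' => bstar b k k' + (v k')%:E) k).
by rewrite -{1}(add0r (v k)%:E); apply: leeD2r; exact: bstar_ge0.
Qed.


Lemma thle : theta p w d h b c f g <= thR%:E.
Proof. by rewrite {1}thE lexx. Qed.

Lemma UpF_nninf i : UpF (theta p w d h b c f g) i != -oo.
Proof.
have j0 : 'I_m := Ordinal m1.
rewrite thE; have H := (T2 thR).2 (thle) i i.
rewrite -ltNye; apply: lt_le_trans H.
apply: lt_le_trans (ltNyr (Order.min (c i * f i) (c i * g i))%R) _.
apply: le_trans (leeDr _ (bstar_ge0 _ _ b i)).
by apply: le_trans (le_bigmax _ _ j0); rewrite le_max lexx orbT.
Qed.

Lemma from_box (v : 'I_n -> R) x :
  (forall k, vlow p w d h c f g (theta p w d h b c f g) k <= (v k)%:E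
                 <= vupp p w d h b c f g (theta p w d h b c f g) k) ->
  (forall i, (x i)%:E = yvec b v i * ((c i)^-1)%:E) ->
  feasible p d b c f g x /\ objective p w h x = theta p w d h b c f g.
Proof.
move=> Hv Hx.
pose Y i := fine (yvec b v i).
have YE : forall i, yvec b v i = (Y i)%:E by move=> i; rewrite /Y fineK // yvec_fin.
have cx : forall i, (c i * x i = Y i)%R.
  move=> i; have := Hx i; rewrite YE -EFinM => -[->].
  by rewrite mulrC divfK.
have HG : Good thR%:E (fun i => c i * x i)%R.
  split.
  - move=> i k; rewrite !cx -!YE; exact: yvec_closure.
  - move=> k; rewrite cx -YE -thE; apply: le_trans (le_yvec v k).
    by case/andP: (Hv k).
  - move=> i; rewrite cx -YE -thE; apply/bigmax_leP => k.
    case/andP: (Hv k) => _; rewrite vuppE => /le_bigminP /(_ i).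
    rewrite subB_le ?bstar_npinf //.
    exact: UpF_nninf.
have [Hf Hle] := (LA3 x thR).2 HG.
split => //; apply/le_anti; rewrite thE Hle /= -thE.
exact: lower_bound.
Qed.

Lemma to_box x :
  feasible p d b c f g x /\ objective p w h x = theta p w d h b c f g ->
  exists v : 'I_n -> R,
          (forall k, vlow p w d h c f g (theta p w d h b c f g) k <= (v k)%:E
                     <= vupp p w d h b c f g (theta p w d h b c f g) k)
          /\ forall i, (x i)%:E = yvec b v i * ((c i)^-1)%:E.
Proof.
move=> [Hf Ho].
have [Hcl Hlo Hup] : Good thR%:E (fun i => c i * x i)%R.
  by apply/LA3; split => //; rewrite Ho thE.
exists (fun i => c i * x i)%R; split.
  move=> k; rewrite thE Hlo /= vuppE; apply/le_bigminP => i.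
  rewrite -thE subB_le ?bstar_npinf ?UpF_nninf // thE.
  exact: le_trans (closure_bstar _ _ b _ Hcl i k) (Hup i).
move=> i; rewrite (yvec_self _ _ b _ Hcl) -EFinM; congr (_%:E).
by rewrite mulrC mulKf.
Qed.

Lemma exists_opt : exists x, feasible p d b c f g x /\ objective p w h x = theta p w d h b c f g.
Proof.
have j0 : 'I_m := Ordinal m1.
have HT := (T2 thR).2 (thle) .
have vfin : forall k, vlow p w d h c f g thR%:E k \is a fin_num.
  move=> k; rewrite fin_numE; apply/andP; split.
    rewrite -ltNye; apply: lt_le_trans (ltNyr (Order.min (c k * f k) (c k * g k))%R) _.
    apply: le_trans (le_bigmax _ _ j0); rewrite le_max lexx orbT //.
  rewrite -ltey; apply: le_lt_trans (leeDr _ (bstar_ge0 _ _ b k)) _.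
  apply: le_lt_trans (HT k k) _; apply: le_lt_trans (bigmin_le _ _ j0) _.
  by rewrite -!EFinB -?EFinM -?EFinD -!EFin_min ltry.
pose v k := fine (vlow p w d h c f g thR%:E k).
have vE : forall k, vlow p w d h c f g thR%:E k = (v k)%:E.
  by move=> k; rewrite /v (fineK (vfin k)).
exists (fun i => fine (yvec b v i) / c i)%R; apply: from_box.
  move=> k; apply/andP; split; first by rewrite thE vE.
  rewrite vuppE; apply/le_bigminP => i.
  rewrite subB_le ?bstar_npinf ?UpF_nninf // thE -vE; exact: HT.
move=> i; rewrite -[yvec b v i]fineK ?yvec_fin // -EFinM.
Qed.

End Problem.

Theorem corollary2 (R : realType) (n m : nat)
  (p : 'I_n -> 'I_m -> R) (w d h : 'I_m -> R)
  (b : 'I_n -> 'I_n -> \bar R) (c f g : 'I_n -> R) :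
  (1 <= n)%N -> (1 <= m)%N ->
  (forall j, 0 < w j)%R -> (forall j, 0 < d j)%R ->
  (forall i, c i != 0%R) -> (forall i, f i <= g i)%R ->
  (* condition 1: every cycle of length 1..n has nonpositive weight *)
  (forall (i : 'I_n) (l : 'I_n) (t : l.-tuple 'I_n), pathw b i t i <= 0) ->
  (* condition 2 *)
  (forall i k, bstar b i k + lowk p d c f g k <= uppi p d c f g i) ->
  let th := theta p w d h b c f g in
  [/\ exists x, feasible p d b c f g x /\ objective p w h x = th,
      forall x, feasible p d b c f g x -> th <= objective p w h x
    & forall x : 'I_n -> R,
        (feasible p d b c f g x /\ objective p w h x = th) <->
        exists v : 'I_n -> R,
          (forall k, vlow p w d h c f g th k <= (v k)%:E
                     <= vupp p w d h b c f g th k)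
          /\ forall i, (x i)%:E = yvec b v i * ((c i)^-1)%:E].
Proof.
move=> n1 m1 wp dp c0 fg cond1 cond2 th; rewrite /th.
split.
- by apply: exists_opt.
- by move=> x Hx; apply: lower_bound.
- move=> x; split.
    by move=> H; apply: to_box.
  move=> [v [Hv Hx]]; eapply from_box; eassumption.
Qed.
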